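(* Let $F$ be a diagonal matching rule for $G$ and let $M$ be the prefix matching generated by $F$. If $M$ is a Morse matching, then $G$ is diagonal.
   Context: $G$ is a finite simple connected graph with shortest-path distance $d$; $\ell(x_0,\dots,x_k)=\sum_{i=0}^{k-1}d(x_i,x_{i+1})$. The magnitude chain complex $\mathrm{MC}_{k,l}(G)$ is the free abelian group on $I_{k,l}(G)=\{(x_0,\dots,x_k)\in V(G)^{k+1}:x_i\ne x_{i+1}\ \forall i,\ \ell=l\}$ with differential $\partial=\sum_{i=1}^{k-1}(-1)^i\partial_i$, where $\partial_i$ deletes $x_i$ if this does not change $\ell$ and is $0$ otherwise; $\mathrm{MH}_{k,l}(G)=H_k(\mathrm{MC}_{*,l}(G))$; $G$ is diagonal if $\mathrm{MH}_{k,l}(G)=0$ for $k\ne l$. Elements of $I_{k,l}(G)$ are called sequences. $\Gamma$ is the directed graph on sequences with an edge $a\to b$ whenever $\partial_i a=b\neq0$ for some $i$. A matching is a set of pairwise vertex-disjoint edges of $\Gamma$; $\Gamma^M$ is $\Gamma$ with edges of $M$ reversed; $M$ is Morse if $\Gamma^M$ has no directed cycle. Matching states: ''unmatched'', ''insert$(i,v)$'' (matched to $(x_0,\dots,x_i,v,x_{i+1},\dots,x_k)$), ''delete$(i)$'' (matched to $(x_0,\dots,\hat x_i,\dots,x_k)$). A prefix matching: whenever $(x_0,\dots,x_k)$ has state insert$(i,v)$ (resp. delete$(i)$), every sequence $(x_0,\dots,x_{i+1},y_{i+2},\dots,y_{k'})$ has the same state. A matching rule is a function $F$ from sequences to $\{\epsilon\}\cup\{\iota(v):v\in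 V(G)\}\cup\{\delta\}$; a prefix matching $M$ is generated by $F$ if for every sequence $(x_0,\dots,x_k)$, $k\ge1$, with unmatched prefix $(x_0,\dots,x_{k-1})$, its state is insert$(k-1,v)$ iff $F(x_0,\dots,x_k)=\iota(v)$ and delete$(k-1)$ iff $F(x_0,\dots,x_k)=\delta$. $F$ is valid if (1) $F(x_0,\dots,x_k)=\iota(v)$ implies $v\notin\{x_{k-1},x_k\}$, $d(x_{k-1},v)+d(v,x_k)=d(x_{k-1},x_k)$, $F(x_0,\dots,x_{k-1},v)=\epsilon$, $F(x_0,\dots,x_{k-1},v,x_k)=\delta$; (2) $F(x_0,\dots,x_k)=\delta$ implies $d(x_{k-2},x_{k-1})+d(x_{k-1},x_k)=d(x_{k-2},x_k)$ and $F(x_0,\dots,x_{k-2},x_k)=\iota(x_{k-1})$. A valid $F$ is diagonal if, w.r.t. the prefix matching it generates, $F(x_0,\dots,x_k)\ne\epsilon$ for every sequence with unmatched prefix $(x_0,\dots,x_{k-1})$ and $d(x_{k-1},x_k)\ge2$. *)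

(* Defs.v *)
From HB Require Import structures.
From mathcomp Require Import all_boot all_order all_algebra.
Set Implicit Arguments. Unset Strict Implicit. Unset Printing Implicit Defensive.
Import Order.TTheory GRing.Theory Num.Theory.

Section MagDefs.
Variables (V : finType) (e : rel V).

Definition simple_graph := symmetric e /\ irreflexive e.
Definition connected_graph := forall x y : V, connect e x y.

Definition reach (n : nat) (x : V) : {set V} :=
  iter n (fun S : {set V} => S :|: [set y | [exists z in S, e z y]]) [set x].

(* shortest-path distance: least n with y in the n-ball of x
   (meaningful for connected graphs, where it is < #|V|) *)
Definition dist (x y : V) : nat :=
  find (fun n => y \in reach n x) (iota 0 #|V|).

Definition ell (x : seq V) : nat :=
  if x is a :: s then sumn (pairmap dist a s) else 0.

Definition is_seq (x : seq V) : bool :=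
  if x is a :: s then path (fun u w => u != w) a s else false.

Definition Iseq (k l : nat) : seq (seq V) :=
  [seq s <- map (@tval k.+1 V) (enum {: k.+1.-tuple V}) | is_seq s && (ell s == l)].

(* (x_0,..,^x_i,..,x_k) and (x_0,..,x_i,v,x_{i+1},..,x_k) *)
Definition del (x : seq V) (i : nat) : seq V := take i x ++ drop i.+1 x.
Definition ins (x : seq V) (i : nat) (v : V) : seq V :=
  take i.+1 x ++ v :: drop i.+1 x.

(* d_i x = y  (nonzero) *)
Definition face (x : seq V) (i : nat) (y : seq V) : bool :=
  (ell (del x i) == ell x) && (del x i == y).

(* the differential of MC_{*,l} on a degree-k chain c (Z-valued function
   on sequences, supported on I_{k,l}) evaluated at y *)
Definition bdry (k l : nat) (c : seq V -> int) (y : seq V) : int :=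
  \sum_(x <- Iseq k l) \sum_(1 <= i < k)
     ((-1) ^+ i * c x * (face x i y)%:R)%R.

Definition supported (k l : nat) (c : seq V -> int) : Prop :=
  forall x, c x != 0%R -> x \in Iseq k l.

Definition MH_vanishes (k l : nat) : Prop :=
  forall c : seq V -> int, supported k l c -> (forall y, bdry k l c y = 0%R) ->
  exists b : seq V -> int, supported k.+1 l b /\ forall y, bdry k.+1 l b y = c y.

Definition diagonal_graph : Prop := forall k l, k <> l -> MH_vanishes k l.

Definition Gamma (a b : seq V) : Prop :=
  is_seq a /\ exists i, 0 < i /\ i.+1 < size a /\ face a i b.

Definition is_matching (M : seq V -> seq V -> Prop) : Prop :=
  (forall a b, M a b -> Gamma a b) /\
  (forall a b a' b', M a b -> M a' b' ->
     (a = a' \/ a = b' \/ b = a' \/ b = b') -> a = a' /\ b = b').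

Definition GammaM (M : seq V -> seq V -> Prop) (a b : seq V) : Prop :=
  (Gamma a b /\ ~ M a b) \/ M b a.

Definition is_Morse (M : seq V -> seq V -> Prop) : Prop :=
  ~ exists (n : nat) (f : nat -> seq V),
      0 < n /\ f n = f 0 /\ forall i, i < n -> GammaM M (f i) (f i.+1).

Definition unmatched (M : seq V -> seq V -> Prop) (x : seq V) : Prop :=
  forall y, ~ M x y /\ ~ M y x.
Definition st_ins (M : seq V -> seq V -> Prop) (x : seq V) (i : nat) (v : V) : Prop :=
  i.+1 < size x /\ M (ins x i v) x.
Definition st_del (M : seq V -> seq V -> Prop) (x : seq V) (i : nat) : Prop :=
  0 < i /\ i.+1 < size x /\ M x (del x i).

Definition prefix_matching (M : seq V -> seq V -> Prop) : Prop :=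
  (forall x i v, is_seq x -> st_ins M x i v ->
     forall y, is_seq y -> i.+2 <= size y -> take i.+2 y = take i.+2 x ->
       st_ins M y i v) /\
  (forall x i, is_seq x -> st_del M x i ->
     forall y, is_seq y -> i.+2 <= size y -> take i.+2 y = take i.+2 x ->
       st_del M y i).

Inductive rule_val := Eps | Iota of V | Delta.

Definition generated_by (F : seq V -> rule_val) (M : seq V -> seq V -> Prop) : Prop :=
  forall p b, p != [::] -> is_seq (rcons p b) -> unmatched M p ->
    (forall v, st_ins M (rcons p b) (size p).-1 v <-> F (rcons p b) = Iota v) /\
    (st_del M (rcons p b) (size p).-1 <-> F (rcons p b) = Delta).

Definition valid_rule (F : seq V -> rule_val) : Prop :=
  (forall p a b v, is_seq (rcons (rcons p a) b) ->
     F (rcons (rcons p a) b) = Iota v ->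
     [/\ v != a, v != b, dist a v + dist v b = dist a b,
         F (rcons (rcons p a) v) = Eps &
         F (rcons (rcons (rcons p a) v) b) = Delta]) /\
  (forall p a m b, is_seq (p ++ [:: a; m; b]) ->
     F (p ++ [:: a; m; b]) = Delta ->
     dist a m + dist m b = dist a b /\ F (p ++ [:: a; b]) = Iota m).

Definition diagonal_rule (F : seq V -> rule_val) (M : seq V -> seq V -> Prop) : Prop :=
  forall p a b, is_seq (rcons (rcons p a) b) -> unmatched M (rcons p a) ->
    2 <= dist a b -> F (rcons (rcons p a) b) <> Eps.

End MagDefs.

(* Main.v *)
Require Import Defs.
From HB Require Import structures.
From mathcomp Require Import all_boot all_order all_algebra.
From mathcomp Require Import ring zify.
From Stdlib Require Import Relations ClassicalEpsilon Classical.
Set Implicit Arguments. Unset Strict Implicit. Unset Printing Implicit Defensive.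
Import Order.TTheory GRing.Theory Num.Theory.

Section Dist.
Variables (V : finType) (e : rel V).

Lemma reach_mono n (S T : {set V}) : S \subset T ->
  iter n (fun S : {set V} => S :|: [set y | [exists z in S, e z y]]) S \subset
  iter n (fun S : {set V} => S :|: [set y | [exists z in S, e z y]]) T.
Proof.
elim: n => //= n IH; move=> /IH{}IH.
apply/subsetP=> y; rewrite !inE => /orP[H|/existsP[z /andP[Hz Hzy]]].
  by rewrite (subsetP IH).
apply/orP; right; apply/existsP; exists z; by rewrite (subsetP IH).
Qed.

Lemma reach_trans m n x y z : y \in reach e m x -> z \in reach e n y ->
  z \in reach e (n + m) x.
Proof.
move=> Hy Hz; rewrite /reach iterD.
have: [set y] \subset reach e m x by rewrite sub1set.
move/(reach_mono n)/subsetP; apply; exact: Hz.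
Qed.

Lemma card_pos (x : V) : 0 < #|V|.
Proof. by apply/card_gt0P; exists x. Qed.

Lemma dist_le x y : dist e x y <= #|V|.
Proof. by rewrite /dist -{2}(size_iota 0 #|V|) find_size. Qed.

Lemma dist_spec x y : dist e x y < #|V| -> y \in reach e (dist e x y) x.
Proof.
rewrite /dist => H.
have Hh : has (fun n => y \in reach e n x) (iota 0 #|V|) by rewrite has_find size_iota.
by have := nth_find 0 Hh; rewrite nth_iota ?add0n.
Qed.

Lemma dist_min x y n : n < #|V| -> y \in reach e n x -> dist e x y <= n.
Proof.
move=> Hn Hy; rewrite /dist; rewrite leqNgt; apply/negP => Hlt.
have := before_find 0 Hlt; rewrite nth_iota // add0n Hy //.
Qed.

Lemma dist_xx x : dist e x x = 0.
Proof.
apply/eqP; rewrite -leqn0; apply: dist_min; first exact: card_pos x.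
by rewrite /reach /= inE.
Qed.

Lemma dist0 x y : dist e x y = 0 -> y = x.
Proof.
move=> H; have := @dist_spec x y; rewrite H /reach /= inE => Hs.
by apply/eqP; apply: Hs; exact: card_pos x.
Qed.

Lemma dist_pos x y : x != y -> 0 < dist e x y.
Proof.
move=> Hxy; rewrite lt0n; apply/eqP => /dist0 H; by rewrite H eqxx in Hxy.
Qed.

Lemma dist_tri x y z : dist e x z <= dist e x y + dist e y z.
Proof.
have Hz := dist_le x z.
case: (ltnP (dist e x y) #|V|) => H1; last by apply: leq_trans Hz (leq_trans H1 (leq_addr _ _)).
case: (ltnP (dist e y z) #|V|) => H2; last by apply: leq_trans Hz (leq_trans H2 (leq_addl _ _)).
case: (ltnP (dist e x y + dist e y z) #|V|) => H3; last by apply: leq_trans Hz H3.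
apply: dist_min => //; rewrite addnC; apply: reach_trans; exact: dist_spec.
Qed.

End Dist.

Section Seqs.
Variables (V : finType) (e : rel V).

Lemma del_cons0 (x : V) s : del (x :: s) 0 = s. Proof. by rewrite /del /= drop0. Qed.
Lemma del_consS (x : V) s i : del (x :: s) i.+1 = x :: del s i. Proof. by rewrite /del. Qed.
Lemma del_nil i : del ([::] : seq V) i = [::]. Proof. by rewrite /del. Qed.
Lemma ell_cons2 (a b : V) s : ell e [:: a, b & s] = dist e a b + ell e (b :: s).
Proof. by []. Qed.

Lemma size_del (s : seq V) i : i < size s -> size (del s i) = (size s).-1.
Proof.
elim: s i => [|x s IH] [|i] // H; first by rewrite del_cons0.
rewrite del_consS /= IH //.
case: s IH H => [|y s] //.
Qed.

Lemma ell_del (s : seq V) i : 0 < i -> i.+1 < size s -> ell e (del s i) <= ell e s.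
Proof.
elim: s i => [|x s IH] [|i] // _ Hi.
case: s IH Hi => [|y s] IH Hi //.
case: i Hi => [|j] Hi.
  case: s IH Hi => [|z r] IH Hi //.
  rewrite del_consS del_cons0 !ell_cons2 addnA leq_add2r; exact: dist_tri.
rewrite del_consS del_consS !ell_cons2 leq_add2l.
by have := IH j.+1 isT Hi; rewrite del_consS.
Qed.

Lemma is_seq2 (x y : V) s : is_seq [:: x, y & s] = (x != y) && is_seq (y :: s).
Proof. by []. Qed.

Lemma del_seq (s : seq V) i : is_seq s -> 0 < i -> i.+1 < size s ->
  ell e (del s i) = ell e s -> is_seq (del s i).
Proof.
elim: s i => [|x s IH] [|i] // Hs _ Hi.
case: s IH Hs Hi => [|y s] IH Hs Hi //.
move: Hs; rewrite is_seq2 => /andP[Hxy Hs].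
case: i Hi => [|j] Hi.
  case: s IH Hs Hi => [|z r] IH Hs Hi //.
  rewrite del_consS del_cons0 !ell_cons2 addnA => /addIn Hd.
  move: Hs; rewrite is_seq2 is_seq2 => /andP[Hyz ->]; rewrite andbT; apply/negP => /eqP Exz.
  subst z; move: Hd; rewrite dist_xx => /esym/eqP; rewrite addn_eq0 => /andP[/eqP H _].
  by move: (dist_pos e Hxy); rewrite H.
rewrite del_consS del_consS !ell_cons2 => /addnI Hd.
have := IH j.+1 Hs isT Hi; rewrite del_consS Hd => /(_ erefl) H.
by rewrite is_seq2 Hxy H.
Qed.

Lemma del_del (s : seq V) i j : i < j -> del (del s j) i = del (del s i) j.-1.
Proof.
elim: s i j => [|x s IH] [|i] [|j] // H; rewrite ?del_nil //.
  by rewrite del_consS !del_cons0.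
rewrite !del_consS; case: j H => [|j] H //.
by rewrite del_consS IH.
Qed.

Lemma del_inj (s : seq V) i j : is_seq s -> i < size s -> j < size s ->
  del s i = del s j -> i = j.
Proof.
elim: s i j => [|x s IH] [|i] [|j] // Hs Hi Hj.
- case: s IH Hs Hi Hj => [|y s] // IH; rewrite is_seq2 => /andP[Hxy _] _ _.
  by rewrite del_consS del_cons0 => -[E]; rewrite E eqxx in Hxy.
- case: s IH Hs Hi Hj => [|y s] // IH; rewrite is_seq2 => /andP[Hxy _] _ _.
  by rewrite del_consS del_cons0 => -[E]; rewrite E eqxx in Hxy.
- case: s IH Hs Hi Hj => [|y s] // IH; rewrite is_seq2 => /andP[Hxy Hs] Hi Hj.
  rewrite !del_consS => -[E]; congr S; exact: IH.
Qed.

Lemma ins_del (y : seq V) i x0 : 0 < i -> i < size y ->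
  ins (del y i) i.-1 (nth x0 y i) = y.
Proof.
case: i => [|i] // _ Hi; rewrite /ins /del.
have Hs : size (take i.+1 y) = i.+1 by rewrite size_take Hi.
rewrite [i.+1.-1]/= -{1}Hs take_size_cat // -Hs drop_size_cat // Hs.
rewrite -(drop_nth x0 Hi) cat_take_drop //. all: rewrite size_take Hi //.
Qed.

End Seqs.

Section Chains.
Variables (V : finType) (e : rel V).

Lemma mem_Iseq k l x :
  (x \in Iseq e k l) = [&& is_seq x, size x == k.+1 & ell e x == l].
Proof.
have Hm : (x \in map (@tval k.+1 V) (enum {: k.+1.-tuple V})) = (size x == k.+1).
  apply/mapP/idP.
    by move=> [t _ ->]; rewrite size_tuple.
  move=> /eqP H; exists (Tuple (introT eqP H)) => //; by rewrite mem_enum.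
rewrite /Iseq mem_filter Hm.
by case: (is_seq x); case: (size x == k.+1); case: (ell e x == l).
Qed.

Lemma uniq_Iseq k l : uniq (Iseq e k l).
Proof.
apply: filter_uniq; rewrite map_inj_uniq ?enum_uniq //; exact: val_inj.
Qed.

Local Open Scope ring_scope.

Definition inc (y z : seq V) : int :=
  \sum_(1 <= j < (size y).-1) ((-1) ^+ j * (face e y j z)%:R).

Lemma bdry_lin k l (a b : seq V -> int) r w :
  bdry e k l (fun z => a z + r * b z) w = bdry e k l a w + r * bdry e k l b w.
Proof.
rewrite /bdry mulr_sumr -big_split; apply: eq_bigr => x _.
rewrite mulr_sumr -big_split; apply: eq_bigr => i _ /=; ring.
Qed.

Lemma bdry0 k l w : bdry e k l (fun _ => 0) w = 0.
Proof.
rewrite /bdry big1 // => x _; rewrite big1 // => i _; by rewrite mulr0 mul0r.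
Qed.

Lemma bdry_delta k l y (t : int) z : y \in Iseq e k.+1 l ->
  bdry e k.+1 l (fun w => if w == y then t else 0) z = t * inc y z.
Proof.
move=> Hy; rewrite /bdry (bigD1_seq y Hy (uniq_Iseq _ _)) /= eqxx.
rewrite [X in _ + X]big1_seq ?addr0; last first.
  move=> x /andP[/negbTE -> _]; rewrite big1 // => i _; by rewrite mulr0 mul0r.
move: Hy; rewrite mem_Iseq => /and3P[_ /eqP Hs _].
rewrite /inc Hs /= mulr_sumr; apply: eq_bigr => i _; ring.
Qed.

Lemma face_mem k l x j z : x \in Iseq e k.+1 l -> (0 < j)%N -> (j < k.+1)%N ->
  face e x j z -> z \in Iseq e k l.
Proof.
rewrite !mem_Iseq => /and3P[Hs /eqP Hsz /eqP Hl] Hj Hjk /andP[/eqP He /eqP <-].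
have Hj' : (j.+1 < size x)%N by rewrite Hsz ltnS.
rewrite (del_seq Hs Hj Hj' He) size_del ?Hsz; last by rewrite ltnW.
apply/and3P; split => //; apply/eqP; by [|transitivity (ell e x)].
Qed.

Lemma face_uniq y i j z : is_seq y -> (0 < i)%N -> (i.+1 < size y)%N -> (0 < j)%N ->
  (j.+1 < size y)%N -> face e y i z -> face e y j z -> i = j.
Proof.
move=> Hs _ Hi _ Hj /andP[_ /eqP E1] /andP[_ /eqP E2].
apply: (del_inj Hs); [exact: ltnW|exact: ltnW|by rewrite E1 E2].
Qed.

Lemma inc_face y i x : is_seq y -> (0 < i)%N -> (i.+1 < size y)%N -> face e y i x ->
  inc y x = (-1) ^+ i.
Proof.
move=> Hs Hi0 Hi Hf; rewrite /inc.
have Hm : i \in index_iota 1 (size y).-1.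
  by rewrite mem_index_iota Hi0 /= -ltnS prednK // (leq_ltn_trans _ Hi).
rewrite (bigD1_seq i Hm (iota_uniq _ _)) /= Hf big1_seq ?addr0 ?mulr1 //.
move=> j /andP[Hji]; rewrite mem_index_iota => /andP[Hj0 Hj].
case Hfj: (face e y j x); last by rewrite mulr0.
have Hj' : (j.+1 < size y)%N by rewrite -(prednK (leq_ltn_trans (leq0n _) Hi)) ltnS.
by rewrite (face_uniq Hs Hi0 Hi Hj0 Hj' Hf Hfj) eqxx in Hji.
Qed.

Lemma inc_nz y z : inc y z != 0 ->
  exists j, [/\ (0 < j)%N, (j.+1 < size y)%N & face e y j z].
Proof.
move=> H; case Hh: (has (fun j => face e y j z) (index_iota 1 (size y).-1)).
  move/hasP: Hh => [j]; rewrite mem_index_iota => /andP[Hj0 Hj] Hf; exists j; split => //.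
  by case: (size y) Hj.
case/negP: H; rewrite /inc big1_seq // => j /andP[_ Hj].
by move/hasPn: Hh => /(_ j Hj)/negbTE ->; rewrite mulr0.
Qed.

End Chains.

Section P4S.

Local Open Scope ring_scope.

Lemma cancel_sum (f : nat -> nat -> int) n :
  (forall a b, (b <= a)%N -> (a < n)%N -> f a.+1 b = - f b a) ->
  \sum_(0 <= a < n.+1) \sum_(0 <= b < n) f a b = 0.
Proof.
elim: n => [|n IH] H.
  by rewrite big1 // => a _; rewrite big_geq.
under eq_bigr => a _ do rewrite big_nat_recr //=.
rewrite big_split /= big_nat_recr //= IH; last first.
  by move=> a b Hba Ha; apply: H => //; exact: ltnW.
rewrite add0r big_nat_recr //= addrCA -big_nat_recr //= addrC.
rewrite -big_split /= big1_seq // => b /andP[_]; rewrite mem_index_iota => /andP[_ Hb]; rewrite H ?addNr //.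
Qed.

Section DD.
Variables (V : finType) (e : rel V).

Lemma sum_face k l y j (g : seq V -> int) : y \in Iseq e k.+1 l ->
  (0 < j)%N -> (j < k.+1)%N ->
  \sum_(z <- Iseq e k l) (face e y j z)%:R * g z =
  (ell e (del y j) == ell e y)%:R * g (del y j).
Proof.
move=> Hy Hj0 Hj.
case Hl: (ell e (del y j) == ell e y); last first.
  rewrite mul0r big1_seq // => z _; by rewrite /face Hl mul0r.
have Hf : face e y j (del y j) by rewrite /face Hl eqxx.
have Hm := face_mem Hy Hj0 Hj Hf.
rewrite (bigD1_seq _ Hm (uniq_Iseq _ _ _)) /= Hf big1_seq ?addr0 //.
move=> z /andP[Hz _]; rewrite /face Hl /=.
by rewrite eq_sym (negbTE Hz) mul0r.
Qed.

Definition T (y : seq V) w j i : int :=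
  (ell e (del y j) == ell e y)%:R * (face e (del y j) i w)%:R.

Lemma T_eq y w j i : (0 < j)%N -> (j.+1 < size y)%N -> (0 < i)%N -> (i.+2 < size y)%N ->
  T y w j i = ((ell e (del (del y j) i) == ell e y) && (del (del y j) i == w))%:R.
Proof.
move=> Hj0 Hj Hi0 Hi; rewrite /T /face.
have Hsd : size (del y j) = (size y).-1 by rewrite size_del // ltnW.
have Hi' : (i.+1 < size (del y j))%N by rewrite Hsd -ltnS prednK // (ltn_trans _ Hj).
case: eqP => Hl.
  by rewrite Hl mul1r.
rewrite mul0r; case: eqP => // Hl2; exfalso.
have H1 := ell_del e Hi0 Hi'.
have H2 := ell_del e Hj0 Hj.
apply: Hl; apply/eqP; rewrite eqn_leq H2 /=; by rewrite -Hl2.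
Qed.

Lemma dd0 k l y w : y \in Iseq e k.+1 l -> bdry e k l (inc e y) w = 0.
Proof.
move=> Hy; have Hy' := Hy; move: Hy'; rewrite mem_Iseq => /and3P[Hs /eqP Hsz _].
case: k Hy Hsz => [|n] Hy Hsz.
  by rewrite /bdry big1 // => z _; rewrite big_geq.
rewrite /bdry exchange_big /=.
have E1 : forall i, \sum_(z <- Iseq e n.+1 l) (-1) ^+ i * inc e y z * (face e z i w)%:R =
   \sum_(1 <= j < n.+2) (-1) ^+ i * (-1) ^+ j * T y w j i.
  move=> i.
  under eq_bigr => z _ do rewrite /inc Hsz /= mulr_sumr mulr_suml.
  rewrite exchange_big /=; apply: eq_big_nat => j /andP[Hj0 Hj].
  transitivity (\sum_(z <- Iseq e n.+1 l) ((face e y j z)%:R : int) * ((-1) ^+ i * (-1) ^+ j * (face e z i w)%:R)).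
    by apply: eq_bigr => z _; ring.
  rewrite (sum_face (fun z => (-1) ^+ i * (-1) ^+ j * (face e z i w)%:R) Hy Hj0 Hj) /T /=; ring.
under eq_bigr => i _ do rewrite E1.
rewrite big_add1 /=.
under eq_bigr => i _ do rewrite big_add1 /=.
rewrite exchange_big /=.
apply: cancel_sum => a b Hba Ha.
have ET : T y w a.+2 b.+1 = T y w b.+1 a.+1.
  rewrite !T_eq ?Hsz //; try lia.
  by rewrite (@del_del _ y b.+1 a.+2).
rewrite ET (exprS _ a.+1); ring.
Qed.
End DD.

End P4S.

Definition pb (P : Prop) : bool := if excluded_middle_informative P then true else false.
Lemma pbP (P : Prop) : reflect P (pb P).
Proof. rewrite /pb; case: excluded_middle_informative => H; by constructor. Qed.

Lemma count_strict (T : eqType) (p q : pred T) s x : (forall y, p y -> q y) ->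
  x \in s -> q x -> ~~ p x -> (count p s < count q s)%N.
Proof.
move=> Hpq; elim: s => [|y s IH] //; rewrite inE => /orP[/eqP <-|Hx] Hq Hp /=.
  rewrite (negbTE Hp) Hq add0n add1n ltnS; exact: sub_count.
have h2 := IH Hx Hq Hp.
have h1 : (p y <= q y)%N by case Hy: (p y) => //; rewrite (Hpq _ Hy).
lia.
Qed.

Lemma ct_path (A : Type) (R : relation A) a b : clos_trans A R a b ->
  exists n (f : nat -> A), (0 < n)%N /\ f 0 = a /\ f n = b /\
    forall i, (i < n)%N -> R (f i) (f i.+1).
Proof.
move=> H; apply clos_trans_t1n in H.
induction H as [x y Hxy|x y z Hxy _ [n [f [Hn [H0 [Hn' Hs]]]]]].
  exists 1, (fun i => if i is 0 then x else y); split => //; split => //; split => //.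
  by case.
exists n.+1, (fun i => if i is j.+1 then f j else x); split => //; split => //; split => //.
case => [|i] Hi; first by rewrite H0.
exact: Hs.
Qed.

Section Morse.
Variables (V : finType) (e : rel V) (M : seq V -> seq V -> Prop).
Hypothesis HM : is_matching e M.
Hypothesis HMorse : is_Morse e M.

Local Notation R := (clos_trans (seq V) (GammaM e M)).

Lemma R_irr x : ~ R x x.
Proof.
move=> H; have [n [f [Hn [H0 [Hn' Hs]]]]] := ct_path H; apply: HMorse.
by exists n, f; split => //; split => //; rewrite Hn' H0.
Qed.

Lemma R_trans x y z : R x y -> R y z -> R x z.
Proof. move=> H1 H2; exact: t_trans H1 H2. Qed.

Lemma exists_min (P : seq V -> Prop) (s : seq (seq V)) :
  (forall x, P x -> x \in s) -> (exists x, P x) ->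
  exists x, P x /\ forall x', P x' -> ~ R x' x.
Proof.
move=> Hs [x Hx].
suff: forall m x, (count (fun y => pb (R y x)) s <= m)%N -> P x ->
  exists x, P x /\ forall x', P x' -> ~ R x' x by apply; [exact: leqnn|exact Hx].
elim => [|m IH] {Hx}x Hc Hx.
  all: case: (classic (exists x', P x' /\ R x' x)) => [[x' [Hx' Hr]]|Hn];
    last by exists x; split => // x' Hx' Hr; apply: Hn; exists x'.
  have : (count (fun y => pb (R y x')) s < count (fun y => pb (R y x)) s)%N.
    apply: count_strict (Hs _ Hx') _ _.
    - by move=> y /pbP Hy; apply/pbP; exact: R_trans Hy Hr.
    - exact/pbP.
    - by apply/pbP; exact: R_irr.
  by rewrite leqn0 in Hc; rewrite (eqP Hc).
have Hlt : (count (fun y => pb (R y x')) s < count (fun y => pb (R y x)) s)%N.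
  apply: count_strict (Hs _ Hx') _ _.
  - by move=> y /pbP Hy; apply/pbP; exact: R_trans Hy Hr.
  - exact/pbP.
  - by apply/pbP; exact: R_irr.
apply: (IH x') => //; rewrite -ltnS; exact: leq_trans Hlt Hc.
Qed.


Local Open Scope ring_scope.

Lemma bdry_inc k l c z :
  bdry e k l c z = \sum_(x <- Iseq e k l) c x * inc e x z.
Proof.
rewrite /bdry !big_seq; apply: eq_bigr => x Hx.
move: Hx; rewrite mem_Iseq => /and3P[_ /eqP Hs _].
rewrite /inc Hs /= mulr_sumr; apply: eq_bigr => i _; ring.
Qed.

Definition U (c : seq V -> int) z := exists x0, c x0 != 0 /\ (x0 = z \/ R x0 z).

Lemma U_sub (c c' : seq V -> int) x :
  (forall z, c' z != 0 -> c z != 0 \/ R x z) -> c x != 0 ->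
  forall z, U c' z -> U c z.
Proof.
move=> HK Hx z [x0 [H0 Hr]]; case: (HK x0 H0) => [Hc0|Hrx].
  by exists x0.
exists x; split => //; right; case: Hr => [<-|Hr] //; exact: R_trans Hrx Hr.
Qed.

Lemma not_U (c c' : seq V -> int) x :
  c' x = 0 -> (forall z, c' z != 0 -> c z != 0 \/ R x z) ->
  (forall x', c x' != 0 -> ~ R x' x) -> ~ U c' x.
Proof.
move=> Hx HK Hmin [x0 [H0 [E|Hr]]].
  by rewrite E Hx eqxx in H0.
case: (HK x0 H0) => [Hc0|Hrx]; first exact: Hmin Hc0 Hr.
exact: R_irr (R_trans Hrx Hr).
Qed.

Lemma morse k l : (forall x, x \in Iseq e k l -> exists y, M x y \/ M y x) ->
  MH_vanishes e k l.
Proof.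
move=> Hmat c0 Hs0 Hz0.
suff: forall n c, (count (fun z => pb (U c z)) (Iseq e k l) < n)%N ->
  supported e k l c -> (forall y, bdry e k l c y = 0) ->
  exists b, supported e k.+1 l b /\ forall y, bdry e k.+1 l b y = c y.
  apply; [exact: leq_ltn_trans (count_size _ _) (ltnSn _) | done | done].
elim => [|n IH] c Hc Hs Hz //.
case: (classic (exists x, c x != 0)) => [Hex|Hno]; last first.
  exists (fun _ => 0); split; first by move=> x; rewrite eqxx.
  move=> y; rewrite bdry0; case: (c y =P 0) => // /eqP H; exfalso; apply: Hno; by exists y.
have [x [Hx0 Hmin]] := exists_min (P := fun x => c x != 0) Hs Hex.
have HxX := Hs x Hx0.
have [y [Hxy|Hyx]] := Hmat x HxX.
- exfalso.
  have [Hxs [i [Hi0 [Hi Hf]]]] := HM.1 _ _ Hxy.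
  have Hb := Hz y.
  rewrite bdry_inc (bigD1_seq x HxX (uniq_Iseq _ _ _)) /= (inc_face Hxs Hi0 Hi Hf) in Hb.
  case: (classic (exists x', x' \in Iseq e k l /\ x' != x /\ c x' * inc e x' y != 0))
    => [[x' [Hx'X [Hx'x Hnz]]]|Hno].
    have Hcx' : c x' != 0 by apply: contraNneq Hnz => ->; rewrite mul0r.
    have Hix' : inc e x' y != 0 by apply: contraNneq Hnz => ->; rewrite mulr0.
    apply: (Hmin x' Hcx'); apply: (t_trans _ _ _ y); apply: t_step; last by right.
    left; split.
      move: Hx'X; rewrite mem_Iseq => /and3P[Hx's _ _]; split => //.
      have [j [Hj0 Hj Hfj]] := inc_nz Hix'; by exists j.
    move=> Hm; have [E _] := HM.2 _ _ _ _ Hm Hxy (or_intror (or_intror (or_intror erefl))).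
    by rewrite E eqxx in Hx'x.
  rewrite big1_seq ?addr0 in Hb; last first.
    move=> x' /andP[Hx'x Hx'X]; case: (eqVneq (c x' * inc e x' y) 0) => // Hn; exfalso; apply: Hno; by exists x'.
  move/eqP: Hb; rewrite mulf_eq0 signr_eq0 orbF; exact/negP.
- have [Hys [i0 [Hi0 [Hi Hf]]]] := HM.1 _ _ Hyx.
  move: (Hf) => /andP[/eqP Hel /eqP Hdel].
  have HyX : y \in Iseq e k.+1 l.
    rewrite mem_Iseq; move: HxX; rewrite mem_Iseq -Hdel Hel => /and3P[_ Hsz ->]; rewrite Hys /= andbT.
    by rewrite size_del ?(ltnW Hi) // in Hsz; move: Hsz Hi; case: (size y).
  set t := c x * (-1) ^+ i0.
  pose c' z := c z + (- t) * inc e y z.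
  have Hc'x : c' x = 0.
    rewrite /c' (inc_face Hys Hi0 Hi Hf) /t.
    have Hss : ((-1) ^+ i0 * (-1) ^+ i0 : int) = 1 by rewrite -exprMn mulrNN mulr1 expr1n.
    by rewrite mulNr -mulrA Hss mulr1 subrr.
  have Hor : forall z, c' z != 0 -> c z != 0 \/ inc e y z != 0.
    move=> z; rewrite /c'; case: (eqVneq (c z) 0) => [->|H] Hz'; last by left.
    by right; apply: contraNneq Hz' => ->; rewrite mulr0 addr0.
  have HK : forall z, c' z != 0 -> c z != 0 \/ R x z.
    move=> z Hz'; case: (Hor z Hz') => [H|H]; first by left.
    right; apply: (t_trans _ _ _ y); apply: t_step; first by right.
    left; split.
      split => //; have [j [Hj0 Hj Hfj]] := inc_nz H; by exists j.
    move=> Hm; have [_ E] := HM.2 _ _ _ _ Hyx Hm (or_introl erefl).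
    by move: Hz'; rewrite -E Hc'x eqxx.
  have Hs' : supported e k l c'.
    move=> z Hz'; case: (Hor z Hz') => [H|H]; first exact: Hs.
    have [j [Hj0 Hj Hfj]] := inc_nz H.
    apply: (face_mem HyX Hj0 _ Hfj).
    move: HyX; rewrite mem_Iseq => /and3P[_ /eqP Hsz _]; by rewrite Hsz ltnS in Hj.
  have Hz' : forall w, bdry e k l c' w = 0.
    move=> w; rewrite /c' bdry_lin Hz (dd0 _ HyX) mulr0 addr0 //.
  have Hcnt : (count (fun z => pb (U c' z)) (Iseq e k l) < n)%N.
    suff Hlt : (count (fun z => pb (U c' z)) (Iseq e k l) < count (fun z => pb (U c z)) (Iseq e k l))%N by lia.
    apply: count_strict HxX _ _.
    - move=> z /pbP H; apply/pbP; exact: U_sub HK Hx0 z H.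
    - by apply/pbP; exists x; split => //; left.
    - by apply/pbP; exact: not_U Hc'x HK Hmin.
  have [b' [Hb's Hb']] := IH c' Hcnt Hs' Hz'.
  exists (fun w => b' w + t * (if w == y then 1 else 0)); split.
    move=> w; case: (w =P y) => [->|_] //; rewrite mulr0 addr0; exact: Hb's.
  move=> z; rewrite bdry_lin Hb' (bdry_delta _ _ HyX) /c' mul1r.
  by rewrite mulNr subrK.
Qed.

End Morse.

Section Crit.
Variables (V : finType) (e : rel V) (F : seq V -> rule_val V) (M : seq V -> seq V -> Prop).
Hypothesis HM : is_matching e M.
Hypothesis Hpre : prefix_matching M.
Hypothesis Hgen : generated_by F M.
Hypothesis Hdiag : diagonal_rule e F M.

Lemma ell_rcons (x : V) s b : ell e (rcons (x :: s) b) = ell e (x :: s) + dist e (last x s) b.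
Proof.
rewrite rcons_cons /ell -cats1 pairmap_cat sumn_cat /=; by rewrite addn0.
Qed.

Lemma is_seq_rcons (x : V) s b : is_seq (rcons (x :: s) b) = is_seq (x :: s) && (last x s != b).
Proof. by rewrite rcons_cons /is_seq rcons_path. Qed.

Lemma prefix_unmatched p b : p != [::] -> is_seq (rcons p b) ->
  unmatched M (rcons p b) -> unmatched M p.
Proof.
case: p => [|a s] // _ Hs Hu.
have Hps : is_seq (a :: s) by move: Hs; rewrite is_seq_rcons => /andP[].
have Hsz : size (rcons (a :: s) b) = (size (a :: s)).+1 by rewrite size_rcons.
move=> y; split => Hm.
- have [_ [i [Hi0 [Hi /andP[_ /eqP Hd]]]]] := HM.1 _ _ Hm.
  have Hst : st_del M (a :: s) i by split => //; split => //; rewrite Hd.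
  have Hb : (i.+2 <= size (rcons (a :: s) b))%N by rewrite Hsz ltnS; exact: ltnW Hi.
  have Ht : take i.+2 (rcons (a :: s) b) = take i.+2 (a :: s) by rewrite -cats1 takel_cat.
  have [_ [_ Hm2]] := Hpre.2 _ _ Hps Hst _ Hs Hb Ht.
  by case: (Hu (del (rcons (a :: s) b) i)) => H _; apply: H.
- have [Hys [j [Hj0 [Hj /andP[_ /eqP Hd]]]]] := HM.1 _ _ Hm.
  have Hsd : size (a :: s) = (size y).-1 by rewrite -Hd size_del // ltnW.
  have Hst : st_ins M (a :: s) j.-1 (nth b y j).
    split; first by rewrite Hsd; lia.
    by rewrite -Hd ins_del ?Hd // ltnW.
  have Hb : (j.-1.+2 <= size (rcons (a :: s) b))%N by rewrite Hsz Hsd; lia.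
  have Ht : take j.-1.+2 (rcons (a :: s) b) = take j.-1.+2 (a :: s).
    by rewrite -cats1 takel_cat // Hsd; lia.
  have [_ Hm2] := Hpre.1 _ _ _ Hps Hst _ Hs Hb Ht.
  by case: (Hu (ins (rcons (a :: s) b) j.-1 (nth b y j))) => _ H; apply: H.
Qed.

Lemma crit x : is_seq x -> unmatched M x -> ell e x = (size x).-1.
Proof.
elim/last_ind: x => [|p b IH] // Hs Hu.
case: p IH Hs Hu => [|a s] IH Hs Hu; first by [].
have Hps : is_seq (a :: s) by move: Hs; rewrite is_seq_rcons => /andP[].
have Hab : last a s != b by move: Hs; rewrite is_seq_rcons => /andP[].
have Hpu := @prefix_unmatched (a :: s) b isT Hs Hu.
have Hell := IH Hps Hpu.
have HF : F (rcons (a :: s) b) = Eps V.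
  have [H1 H2] := Hgen (p := a :: s) (b := b) isT Hs Hpu.
  case Hf: (F (rcons (a :: s) b)) => [|v|] //.
  + have [_ Hm] := (H1 v).2 Hf; by case: (Hu (ins (rcons (a :: s) b) (size (a :: s)).-1 v)) => _ H.
  + have [_ [_ Hm]] := H2.2 Hf; by case: (Hu (del (rcons (a :: s) b) (size (a :: s)).-1)) => H _.
have Hd : (dist e (last a s) b < 2)%N.
  rewrite ltnNge; apply/negP => H2.
  have := Hdiag (p := belast a s) (a := last a s) (b := b); rewrite -lastI.
  by move=> /(_ Hs Hpu H2).
have Hd0 := dist_pos e Hab.
rewrite ell_rcons Hell size_rcons /=.
have -> : dist e (last a s) b = 1%N by lia.
by rewrite addn1.
Qed.

End Crit.

Theorem corollary3p6 (V : finType) (e : rel V)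
  (Hsimple : simple_graph e) (Hconn : connected_graph e)
  (F : seq V -> rule_val V) (M : seq V -> seq V -> Prop) :
  valid_rule e F -> diagonal_rule e F M ->
  is_matching e M -> prefix_matching M -> generated_by F M ->
  is_Morse e M -> diagonal_graph e.
Proof.
move=> _ Hdiag HM Hpre Hgen HMorse k l Hkl.
apply: (morse HM HMorse) => x HxX.
case: (classic (exists y, M x y \/ M y x)) => // Hno; exfalso.
have Hu : unmatched M x by move=> y; split => H; apply: Hno; exists y; [left|right].
move: HxX; rewrite mem_Iseq => /and3P[Hs /eqP Hsz /eqP Hl].
have := crit HM Hpre Hgen Hdiag Hs Hu; rewrite Hsz Hl /= => H; apply: Hkl; by rewrite H.
Qed.
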